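(* Let $N,M$ be positive integers, let $\mathscr{A}\subset\mathscr{M}(N,M)$ and $\mathscr{B}\subset\mathscr{M}(M,N)$ be finite sets of real matrices, and let $\|\cdot\|$ be a submultiplicative norm on $\mathscr{M}(N,N)$. Suppose that for every sequence $\{A_n\}_{n\ge1}$ with $A_n\in\mathscr{A}$ there exists a sequence $\{B_n\}_{n\ge1}$ with $B_n\in\mathscr{B}$ such that $\|A_nB_n\cdots A_1B_1\|\to0$ as $n\to\infty$. Then there exist constants $C>0$ and $\lambda\in(0,1)$ such that for every sequence $\{A_n\in\mathscr{A}\}$ there is a sequence $\{B_n\in\mathscr{B}\}$ for which \[ \|A_nB_n\cdots A_1B_1\|\le C\lambda^n,\qquad n=1,2,\ldots. \]
   Context: $\mathscr{M}(p,q)$ denotes the space of $p\times q$ real matrices with the topology of elementwise convergence. A norm on $\mathscr{M}(N,N)$ is submultiplicative if $\|XY\|\le\|X\|\,\|Y\|$ for all $X,Y$. *)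

(* Defs.v *)
From HB Require Import structures.
From mathcomp Require Import all_boot all_order all_algebra.
From mathcomp Require Import all_classical all_reals all_analysis.
Set Implicit Arguments. Unset Strict Implicit. Unset Printing Implicit Defensive.
Import Order.TTheory GRing.Theory Num.Theory.
Import numFieldNormedType.Exports.
Local Open Scope ring_scope.

Definition submult_norm (R : realType) (N : nat) (nrm : 'M[R]_N -> R) : Prop :=
  [/\ (forall X, nrm X = 0 -> X = 0),
      (forall (c : R) X, nrm (c *: X) = `|c| * nrm X),
      (forall X Y, nrm (X + Y) <= nrm X + nrm Y)
    & (forall X Y, nrm (X *m Y) <= nrm X * nrm Y)].

(* prodAB a b n = A_n B_n ... A_1 B_1, where A_k = a (k-1), B_k = b (k-1);
   prodAB a b 0 is the identity matrix (empty product). *)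
Fixpoint prodAB (R : realType) (N M : nat)
  (a : nat -> 'M[R]_(N, M)) (b : nat -> 'M[R]_(M, N)) (n : nat) : 'M[R]_N :=
  match n with
  | 0 => 1%:M
  | k.+1 => (a k *m b k) *m prodAB a b k
  end.

(* Main.v *)
Require Import Defs.
From HB Require Import structures.
From mathcomp Require Import all_boot all_order all_algebra.
From mathcomp Require Import all_classical all_reals all_analysis.
From mathcomp Require Import zify ring lra.
Set Implicit Arguments. Unset Strict Implicit. Unset Printing Implicit Defensive.
Import Order.TTheory GRing.Theory Num.Theory.
Import numFieldNormedType.Exports.
Local Open Scope classical_set_scope.
Local Open Scope ring_scope.

Lemma prodAB_eq (R : realType) (N M : nat) (a a' : nat -> 'M[R]_(N, M)) b n :
  (forall i, (i < n)%N -> a i = a' i) -> prodAB a b n = prodAB a' b n.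
Proof.
elim: n => [|n IH] H //=.
by rewrite H // IH // => i Hi; apply: H; apply: leqW.
Qed.

Lemma nrm_ge0 (R : realType) (N : nat) (nrm : 'M[R]_N -> R) :
  submult_norm nrm -> forall X, 0 <= nrm X.
Proof.
case=> _ hZ hD _ X.
have h0 : nrm 0 = 0 by rewrite -(scale0r X) hZ normr0 mul0r.
have hN : nrm (- X) = nrm X by rewrite -scaleN1r hZ normrN normr1 mul1r.
have := hD X (- X); rewrite subrr h0 hN; lra.
Qed.

Lemma prod_bound (R : realType) (N M : nat) (nrm : 'M[R]_N -> R)
  (a : nat -> 'M[R]_(N, M)) b (c : R) (Q : 'M[R]_N) m :
  submult_norm nrm -> 0 <= c -> (forall i, nrm (a i *m b i) <= c) ->
  nrm (prodAB a b m *m Q) <= c ^+ m * nrm Q.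
Proof.
move=> hn c0 hc; have h0 := nrm_ge0 hn; case: hn => _ _ _ hM.
elim: m => [|m IH] /=; first by rewrite mul1mx expr0 mul1r.
rewrite -mulmxA exprS -mulrA.
apply: le_trans (hM _ _) _; apply: ler_pM => //.
Qed.

Lemma seq_max (R : realType) (T : eqType) (s : seq T) (f : T -> R) :
  exists c, 1 <= c /\ forall x, x \in s -> f x <= c.
Proof.
elim: s => [|y s [c [c1 hc]]]; first by exists 1.
exists (c + `|f y|); split; first by have := normr_ge0 (f y); lra.
move=> x; rewrite inE => /orP [/eqP ->|xs].
  have := ler_norm (f y); lra.
have := hc x xs; have := normr_ge0 (f y); lra.
Qed.

Lemma seq_bound (T : eqType) (s : seq T) (Q : T -> nat -> Prop) :
  (forall x K K', Q x K -> (K <= K')%N -> Q x K') ->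
  (forall x, x \in s -> exists K, Q x K) -> exists K, forall x, x \in s -> Q x K.
Proof.
move=> HW; elim: s => [|y s IH] H; first by exists 0%N.
have [K1 H1] := H y (mem_head _ _).
have [K2 H2] : exists K, forall x, x \in s -> Q x K.
  by apply: IH => x xs; apply: H; rewrite inE xs orbT.
exists (maxn K1 K2) => x; rewrite inE => /orP [/eqP ->|xs].
  by apply: HW H1 _; apply: leq_maxl.
by apply: HW (H2 x xs) _; apply: leq_maxr.
Qed.

Lemma bernoulli (R : realType) (x : R) (k : nat) :
  0 <= x <= 1 -> 1 - k%:R * x <= (1 - x) ^+ k.
Proof.
move=> /andP [x0 x1]; elim: k => [|k IH]; first by rewrite mul0r subr0 expr0.
rewrite exprS -natr1.
have k0 : 0 <= k%:R :> R by apply: ler0n.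
have : (1 - x) * (1 - k%:R * x) <= (1 - x) * (1 - x) ^+ k.
  by apply: ler_wpM2l => //; lra.
nra.
Qed.

Definition upd (T : Type) (a : nat -> T) (k : nat) (x : T) : nat -> T :=
  fun i => if i == k then x else a i.

Fixpoint iseq (T : Type) (t0 : T) (F : nat -> (nat -> T) -> T) (k : nat) : nat -> T :=
  match k with
  | 0 => fun _ => t0
  | k'.+1 => upd (iseq t0 F k') k' (F k' (iseq t0 F k'))
  end.

Lemma konig (T : eqType) (s : seq T) (good : nat -> (nat -> T) -> Prop) (t0 : T)
  (goodW : forall K K' a, (K <= K')%N -> good K a -> good K' a)
  (goodE : forall K a a', (forall i, (i < K)%N -> a i = a' i) -> good K a -> good K a')
  (inf_good : forall a, (forall i, a i \in s) -> exists K, good K a) :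
  exists K, forall a, (forall i, a i \in s) -> good K a.
Proof.
apply: contrapT => Hn.
have Hbad : forall K, exists a, (forall i, a i \in s) /\ ~ good K a.
  move=> K; apply: contrapT => H; apply: Hn; exists K => a Ha.
  by apply: contrapT => Hg; apply: H; exists a.
pose P k a := (forall i, (i < k)%N -> a i \in s) /\ ~ good k a.
have PW : forall k k' a, (k' <= k)%N -> P k a -> P k' a.
  move=> k k' a kk [Ps Pg]; split; first by move=> i Hi; apply: Ps; apply: leq_trans kk.
  by move=> Hg; apply: Pg; apply: goodW Hg.
pose inf k a := forall K, exists a', (forall i, (i < k)%N -> a' i = a i) /\ P (k + K)%N a'.
have step : forall k a, inf k a -> exists x, x \in s /\ inf k.+1 (upd a k x).
  move=> k a Hinf; apply: contrapT => H.
  have HQ : forall x, x \in s -> exists K, ~ exists a',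
      (forall i, (i < k.+1)%N -> a' i = upd a k x i) /\ P (k.+1 + K)%N a'.
    move=> x xs; apply: contrapT => H2; apply: H; exists x; split => // K.
    by apply: contrapT => H3; apply: H2; exists K.
  have HW : forall x K K', (~ exists a',
      (forall i, (i < k.+1)%N -> a' i = upd a k x i) /\ P (k.+1 + K)%N a') ->
      (K <= K')%N -> ~ exists a',
      (forall i, (i < k.+1)%N -> a' i = upd a k x i) /\ P (k.+1 + K')%N a'.
    move=> x K K' HK KK [a' [h1 h2]]; apply: HK; exists a'; split => //.
    by apply: PW h2; rewrite leq_add2l.
  have [K HK] := seq_bound HW HQ.
  have [a' [ha' [Ps Pg]]] := Hinf K.+1.
  apply: (HK (a' k)); first by apply: Ps; rewrite -addSnnS leq_addr.
  exists a'; split; last by rewrite addSnnS.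
  move=> i Hi; rewrite /upd; case: eqP => [->//|/eqP ne]; apply: ha'.
  by rewrite ltn_neqAle ne -ltnS.
have [F HF] : {F : nat -> (nat -> T) -> T & forall k a, inf k a ->
    F k a \in s /\ inf k.+1 (upd a k (F k a))}.
  have H1 : forall k, exists Fk : (nat -> T) -> T, forall a, inf k a ->
      Fk a \in s /\ inf k.+1 (upd a k (Fk a)).
    move=> k.
    have Hex : forall a, exists x : T, inf k a -> x \in s /\ inf k.+1 (upd a k x).
      move=> a; case: (pselect (inf k a)) => [/step [x [xs hx]]|ni]; first by exists x.
      by exists t0.
    have [f Hf] := choice Hex; by exists f.
  have [F HF] := choice H1; by exists F.
have Hinf : forall k, inf k (iseq t0 F k).
  elim => [|k IH]; last by apply: (HF k _ IH).2.
  move=> K; have [a [Ha Hg]] := Hbad K; exists a; split => //; split => //.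
pose a i := F i (iseq t0 F i).
have Has : forall i, a i \in s := fun i => (HF i _ (Hinf i)).1.
have Hag : forall k i, (i < k)%N -> iseq t0 F k i = a i.
  elim=> // k IH i Hi /=; rewrite /upd; case: eqP => [->//|/eqP ne].
  by apply: IH; rewrite ltn_neqAle ne -ltnS.
have [K HK] := inf_good a Has.
have [a' [h1 [_ h2]]] := Hinf K 0%N.
apply: h2; rewrite addn0; apply: goodE HK => i Hi.
by rewrite h1 // Hag.
Qed.

Fixpoint stf (nn : nat -> nat) (i : nat) : nat :=
  match i with
  | 0 => 0%N
  | i'.+1 => if (i'.+1 - stf nn i' < nn (stf nn i'))%N then stf nn i' else i'.+1
  end.

Theorem theorem1 (R : realType) (N M : nat) (hN : (0 < N)%N) (hM : (0 < M)%N)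
  (As : seq 'M[R]_(N, M)) (Bs : seq 'M[R]_(M, N)) (nrm : 'M[R]_N -> R)
  (hnrm : submult_norm nrm)
  (hyp : forall a : nat -> 'M[R]_(N, M), (forall n, a n \in As) ->
     exists b : nat -> 'M[R]_(M, N), (forall n, b n \in Bs) /\
       (nrm (prodAB a b n) @[n --> \oo] --> (0 : R))) :
  exists (C lam : R), 0 < C /\ 0 < lam < 1 /\
    forall a : nat -> 'M[R]_(N, M), (forall n, a n \in As) ->
      exists b : nat -> 'M[R]_(M, N), (forall n, b n \in Bs) /\
        forall n : nat, (0 < n)%N -> nrm (prodAB a b n) <= C * lam ^+ n.
Proof.
have nrm0 := nrm_ge0 hnrm.
have hmul : forall X Y, nrm (X *m Y) <= nrm X * nrm Y by case: hnrm.
have [c [c1 hc]] : exists c, 1 <= c /\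
    forall A B, A \in As -> B \in Bs -> nrm (A *m B) <= c.
  have [c [c1 hc]] := seq_max (allpairs (fun A B => A *m B) As Bs) nrm.
  by exists c; split => // A B HA HB; apply: hc; apply: allpairs_f.
pose good K (a : nat -> 'M[R]_(N, M)) := exists b : nat -> 'M[R]_(M, N),
  (forall i, b i \in Bs) /\ exists n, (0 < n <= K)%N /\ nrm (prodAB a b n) <= 2^-1.
have [K0 HK0] : exists K, forall a, (forall i, a i \in As) -> good K a.
  apply: (@konig _ As good 0).
  - move=> K K' a KK [b [hb [n [hn hn2]]]]; exists b; split => //; exists n; split => //.
    lia.
  - move=> K a a' Ha [b [hb [n [hn hn2]]]]; exists b; split => //; exists n; split => //.
    rewrite -(prodAB_eq b (a:=a)) // => i Hi; apply: Ha; lia.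
  - move=> a Ha; have [b [hb hcv]] := hyp a Ha.
    have h2 : (0 : R) < 2^-1 by rewrite invr_gt0.
    case: (cvgr_lt 0 hcv (2^-1) h2) => N0 _ HN0.
    exists N0.+1, b; split=> //; exists N0.+1; split; first by lia.
    by apply/ltW; apply: HN0; rewrite /= leqnSn.
pose K := K0.+1.
have HK : forall a, (forall i, a i \in As) -> good K a.
  move=> a Ha; have [b [hb [n [hn hn2]]]] := HK0 a Ha.
  by exists b; split => //; exists n; split => //; rewrite /K; lia.
have Hex : forall a : nat -> 'M[R]_(N, M), exists p : (nat -> 'M[R]_(M, N)) * nat,
    (forall i, a i \in As) -> (forall i, p.1 i \in Bs) /\
    (0 < p.2 <= K)%N /\ nrm (prodAB a p.1 p.2) <= 2^-1.
  move=> a; case: (pselect (forall i, a i \in As)) => [Ha|Ha];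
    last by exists ((fun _ => 0), 0%N).
  by have [b [hb [n [hn hn2]]]] := HK a Ha; exists (b, n).
have [g Hg] := choice Hex.
pose y : R := (2 * K%:R)^-1.
have K1 : 1 <= K%:R :> R by rewrite ler1n.
have hy : y * (2 * K%:R) = 1 by rewrite mulVf //; apply/eqP; lra.
have y0 : 0 < y by rewrite invr_gt0; lra.
pose lam : R := 1 - y.
have lam0 : 0 < lam by rewrite /lam; nra.
have lam1 : lam < 1 by rewrite /lam; lra.
have lamK : 2^-1 <= lam ^+ K.
  have := @bernoulli R y K; rewrite -/lam => hb.
  have : 1 - K%:R * y <= lam ^+ K by apply: hb; apply/andP; split; nra.
  have : K%:R * y = 2^-1.
    have h2 : (2 : R) * 2^-1 = 1 by rewrite mulfV //; apply/eqP; lra.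
    nra.
  move=> ->; lra.
pose e := nrm (1%:M : 'M[R]_N).
have e0 : 0 <= e := nrm0 _.
have cK0 : 0 < c ^+ K by apply: exprn_gt0; lra.
have lK0 : 0 < lam ^+ K by apply: exprn_gt0.
exists (c ^+ K * (e + 1) / lam ^+ K), lam.
split; first by apply: divr_gt0 => //; apply: mulr_gt0 => //; lra.
split; first by rewrite lam0 lam1.
move=> a Ha.
pose sh s := fun i => a (s + i)%N.
have Hsh : forall s i, sh s i \in As by move=> s i; exact: Ha.
pose bb s := (g (sh s)).1.
pose nn s := (g (sh s)).2.
have Hgs : forall s, (forall i, bb s i \in Bs) /\ (0 < nn s <= K)%N /\
    nrm (prodAB (sh s) (bb s) (nn s)) <= 2^-1 := fun s => Hg (sh s) (Hsh s).
pose st := stf nn.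
pose b i := bb (st i) (i - st i)%N.
exists b; split; first by move=> i; exact: (Hgs (st i)).1.
have inv : forall n, (st n <= n)%N /\ (n - st n < nn (st n))%N /\
    nrm (prodAB a b (st n)) <= e * lam ^+ (st n) /\
    prodAB a b n = prodAB (sh (st n)) (bb (st n)) (n - st n) *m prodAB a b (st n).
  elim=> [|n [h1 [h2 [h3 h4]]]].
    have := (Hgs 0%N).2.1; rewrite /st /= => /andP [hp _].
    split => //; split => //; split; first by rewrite expr0 mulr1.
    by rewrite mul1mx.
  have Heq : prodAB a b n.+1 =
      prodAB (sh (st n)) (bb (st n)) (n.+1 - st n) *m prodAB a b (st n).
    rewrite (subSn h1) /= h4 mulmxA /sh subnKC //.
  have Hst : st n.+1 = if (n.+1 - st n < nn (st n))%N then st n else n.+1 by [].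
  case: ifP Hst => Hc Hst; rewrite Hst.
    by split; first lia; split => //; split.
  have Hnn : (n.+1 - st n = nn (st n))%N.
    by move/negbT: Hc; rewrite -leqNgt => Hc; lia.
  split => //; split; first by rewrite subnn; have /andP [] := (Hgs n.+1).2.1.
  split; last by rewrite subnn /= mul1mx.
  rewrite Heq Hnn; apply: le_trans (hmul _ _) _.
  have hB := (Hgs (st n)).2.2.
  have hl : lam ^+ K <= lam ^+ (nn (st n)).
    apply: ler_wiXn2l; [exact: ltW | exact: ltW | ].
    by have /andP [] := (Hgs (st n)).2.1.
  have -> : lam ^+ n.+1 = lam ^+ (nn (st n)) * lam ^+ (st n).
    by rewrite -exprD -Hnn subnK // leqW.
  apply: le_trans (ler_pM (nrm0 _) (nrm0 _) hB h3) _.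
  rewrite [X in _ <= X]mulrCA; apply: ler_wpM2r; last exact: le_trans lamK hl.
  by apply: mulr_ge0 => //; apply: exprn_ge0; exact: ltW.
move=> n _; have [h1 [h2 [h3 h4]]] := inv n.
rewrite h4.
set s := st n.
have hcc : forall i, nrm (sh s i *m bb s i) <= c.
  by move=> i; apply: hc; [exact: Hsh | exact: (Hgs s).1].
apply: le_trans (prod_bound _ _ hnrm _ hcc) _; first lra.
have hnK : (n - s <= K)%N.
  by have /andP [_ hk] := (Hgs s).2.1; move: h2 hk; rewrite -/s; lia.
have E1 : c ^+ (n - s) <= c ^+ K := ler_weXn2l c1 hnK.
have E2 : lam ^+ K <= lam ^+ (n - s) by apply: ler_wiXn2l => //; exact: ltW.
have -> : lam ^+ n = lam ^+ (n - s) * lam ^+ s by rewrite -exprD subnK.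
have z0 : 0 < lam ^+ s by apply: exprn_gt0.
have E3 : 1 <= lam ^+ (n - s) / lam ^+ K by rewrite ler_pdivlMr // mul1r.
have -> : c ^+ K * (e + 1) / lam ^+ K * (lam ^+ (n - s) * lam ^+ s) =
    (c ^+ K * ((e + 1) * lam ^+ s)) * (lam ^+ (n - s) / lam ^+ K) by ring.
rewrite -[X in X <= _]mulr1; apply: ler_pM => //.
  by apply: mulr_ge0 => //; apply: exprn_ge0; lra.
apply: ler_pM => //; first by apply: exprn_ge0; lra.
apply: le_trans h3 _; apply: ler_wpM2r; [exact: ltW | lra].
Qed.
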